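(* For all $f,g\in C[0,1]$, $$ \left|\int_0^1 f(x)g(x)\,dx-\int_0^1f(x)\,dx\int_0^1g(x)\,dx\right|\le\frac14\,\widetilde{\omega}\left(f;\frac1{\sqrt3}\right)\widetilde{\omega}\left(g;\frac1{\sqrt3}\right), $$ and if moreover $f',g'\in L_\infty[0,1]$ then the left-hand side is at most $\frac1{12}\|f'\|_{L_\infty}\|g'\|_{L_\infty}$.
   Context: For $f\in C[0,1]$, $\omega(f;t)=\sup\{|f(x)-f(y)|:x,y\in[0,1],|x-y|\le t\}$ is the first-order modulus of continuity, and $\widetilde{\omega}(f;t)=\sup_{0\le x\le t\le y\le1,\,x\ne y}\frac{(t-x)\omega(f,y)+(y-t)\omega(f,x)}{y-x}$ for $0\le t\le1$, $\widetilde{\omega}(f;t)=\omega(f,1)$ for $t>1$ (its least concave majorant). *)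

(* Defs.v *)
From HB Require Import structures.
From mathcomp Require Import all_boot all_order all_algebra.
From mathcomp Require Import all_classical all_reals all_analysis.
Set Implicit Arguments. Unset Strict Implicit. Unset Printing Implicit Defensive.
Import Order.TTheory GRing.Theory Num.Theory.
Import numFieldNormedType.Exports.
Local Open Scope classical_set_scope.
Local Open Scope ring_scope.

Definition omega {R : realType} (f : R -> R) (t : R) : R :=
  sup [set r | exists x y : R, [/\ 0 <= x <= 1, 0 <= y <= 1, `|x - y| <= t
                                   & r = `|f x - f y| ] ].

(* its least concave majorant, as defined in the paper *)
Definition omega_tilde {R : realType} (f : R -> R) (t : R) : R :=
  if t <= 1 then
    sup [set r | exists x y : R, [/\ 0 <= x <= t, t <= y <= 1, x != y
             & r = ((t - x) * omega f y + (y - t) * omega f x) / (y - x)] ]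
  else omega f 1.

Definition I01 {R : realType} (f : R -> R) : R :=
  Rintegral (@lebesgue_measure R) (`[0, 1] : set R) f.

(* f' exists in L_infty[0,1] with ||f'||_infty <= M (Sobolev sense W^{1,infty}):
   df is a measurable function, essentially bounded by M on [0,1], and
   f(x) = f(0) + int_0^x df for every x in [0,1]. *)
Definition Linf_deriv_bound {R : realType} (f df : R -> R) (M : R) : Prop :=
  [/\ measurable_fun (`[0, 1] : set R) df,
      {ae (@lebesgue_measure R), forall x, x \in `[0, 1] -> `|df x| <= M}
    & forall x, 0 <= x <= 1 ->
        f x = f 0 + Rintegral (@lebesgue_measure R) (`[0, x] : set R) df].

(* Main.v *)
Require Import Defs.
From HB Require Import structures.
From mathcomp Require Import all_boot all_order all_algebra.
From mathcomp Require Import all_classical all_reals all_analysis.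
From mathcomp Require Import ring lra.
Import Order.TTheory GRing.Theory Num.Theory.
Import numFieldNormedType.Exports.
Local Open Scope classical_set_scope.
Local Open Scope ring_scope.
Section S.
Variable R : realType.
Notation CW f := {within `[0, 1%R], continuous (f : R -> R)}.
Lemma cwD (f g : R -> R) : CW f -> CW g -> CW (fun x => f x + g x).
Proof. by move=> cf cg x; apply: continuousD; [exact: cf|exact: cg]. Qed.
Lemma cwM (f g : R -> R) : CW f -> CW g -> CW (fun x => f x * g x).
Proof. by move=> cf cg x; apply: continuousM; [exact: cf|exact: cg]. Qed.
Lemma cwc (c : R) : CW (fun=> c).
Proof. by apply: continuous_subspaceT => x; exact: cst_continuous. Qed.
Lemma cwid : CW (fun x => x).
Proof. by apply: continuous_subspaceT => x; exact: cvg_id. Qed.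
Lemma cwint (f : R -> R) : CW f -> (lebesgue_measure).-integrable `[0, 1] (EFin \o f).
Proof. move=> cf; apply: continuous_compact_integrable => //; exact: segment_compact. Qed.
Lemma I01c (c : R) : I01 (fun=> c) = c.
Proof. rewrite /I01 Rintegral_cst //= lebesgue_measure_itv /= ifT ?ltr01 //= subr0 mulr1. reflexivity. Qed.
Lemma I01D (f g : R -> R) : CW f -> CW g -> I01 (fun x => f x + g x) = I01 f + I01 g.
Proof. by move=> cf cg; rewrite /I01 RintegralD //; apply: cwint. Qed.
Lemma I01Z (f : R -> R) k : CW f -> I01 (fun x => k * f x) = k * I01 f.
Proof. by move=> cf; rewrite /I01 RintegralZl //; apply: cwint. Qed.
Lemma I01_ext (f g : R -> R) : (forall x, 0 <= x <= 1 -> f x = g x) -> I01 f = I01 g.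
Proof. move=> e; apply: eq_Rintegral => x; rewrite inE /= in_itv /=; exact: e. Qed.
Lemma I01_le (f g : R -> R) : CW f -> CW g -> (forall x, 0 <= x <= 1 -> f x <= g x) -> I01 f <= I01 g.
Proof. move=> cf cg e; apply: le_Rintegral => //; try apply: cwint => //.
Qed.
Lemma I01sq : I01 (fun x : R => (x - 2^-1) ^+ 2) = 12^-1.
Proof.
have o2 := @Rintegral_onemXn R 2.
have o1 := @Rintegral_onemXn R 1.
have cp n : CW (fun x : R => (unstable.onem x) ^+ n).
  apply: continuous_subspaceT => x; apply: continuous_onemXn.
rewrite (@I01_ext _ (fun x => unstable.onem x ^+ 2 + ((-1) * (unstable.onem x ^+ 1) + 4^-1))); last first.
  by move=> x _; rewrite /unstable.onem; field.
rewrite I01D //; last by apply: cwD; [apply: cwM => //; apply: cwc|apply: cwc].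
rewrite I01D //; [|apply: cwM => //; apply: cwc|apply: cwc].
rewrite I01Z // I01c. rewrite /I01 o2 o1. by field.
Qed.
Definition T (f g : R -> R) := I01 (fun x => f x * g x) - I01 f * I01 g.
Lemma cwB (f : R -> R) c : CW f -> CW (fun x => f x - c).
Proof. move=> cf; apply: cwD => //; apply: cwc. Qed.
Lemma Tcenter (f : R -> R) c : CW f -> I01 (fun x => (f x - c)^+2) = T f f + (I01 f - c)^+2.
Proof.
move=> cf; rewrite (@I01_ext _ (fun x => f x * f x + ((-2 * c) * f x + c^+2))); last first.
  by move=> x _; ring.
have cff : CW (fun x => f x * f x) by apply: cwM.
rewrite I01D //; last by apply: cwD; [apply: cwM => //; apply: cwc|apply: cwc].
rewrite I01D //; [|apply: cwM => //; apply: cwc|apply: cwc].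
rewrite I01Z // I01c /T; ring.
Qed.
Lemma T_ge0 (h : R -> R) : CW h -> 0 <= T h h.
Proof.
move=> ch; have := @Tcenter h (I01 h) ch; rewrite subrr expr0n /= addr0 => <-.
have -> : (0:R) = I01 (fun=> 0) by rewrite I01c.
apply: I01_le; [apply: cwc| |].
  by apply: cwM; exact: cwB.
by move=> x _; rewrite sqr_ge0.
Qed.
Lemma Tquad (f g : R -> R) l m : CW f -> CW g ->
  T (fun x => l * f x + m * g x) (fun x => l * f x + m * g x)
  = l^+2 * T f f + 2 * l * m * T f g + m^+2 * T g g.
Proof.
move=> cf cg.
have cZ (h : R -> R) k : CW h -> CW (fun x => k * h x) by move=> ch; apply: cwM => //; apply: cwc.
rewrite /T (@I01_ext _ (fun x => l^+2 * (f x * f x) + (2 * l * m * (f x * g x) + m^+2 * (g x * g x)))); last first.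
  by move=> x _; ring.
have cff : CW (fun x => f x * f x) by apply: cwM.
have cfg : CW (fun x => f x * g x) by apply: cwM.
have cgg : CW (fun x => g x * g x) by apply: cwM.
rewrite I01D //; last by apply: cwD; apply: cZ.
rewrite I01D //; try by apply: cZ.
rewrite I01D //; try by apply: cZ.
rewrite !I01Z //; try ring. all: try by apply: cZ. all: try by apply: cwD; apply: cZ.
Qed.
Lemma CS_alg (X Y Z p q : R) : 0 <= p -> 0 <= q -> X <= p^+2 -> Y <= q^+2 ->
  (forall l m, 0 <= l^+2 * X + 2 * l * m * Z + m^+2 * Y) -> `|Z| <= p * q.
Proof.
move=> p0 q0 Xp Yq H.
have [pq0|] := ltrP 0 (p * q).
  have h1 := H q (- p); have h2 := H q p.
  rewrite ler_norml; apply/andP; split.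
    rewrite -subr_ge0 -(pmulr_rge0 _ (_ : 0 < 2 * (p * q))); last by rewrite mulr_gt0.
    nra.
  rewrite -subr_ge0 -(pmulr_rge0 _ (_ : 0 < 2 * (p * q))); last by rewrite mulr_gt0.
  nra.
rewrite le_eqVlt => /orP[/eqP|]; last by rewrite ltNge mulr_ge0.
move=> /eqP; rewrite mulf_eq0 => /orP[]/eqP e0.
  have X0 : X <= 0 by move: Xp; rewrite e0 expr0n.
  set k := `|Y| + 1.
  have h := H k (- Z).
  have hk : 0 < 2 * k - Y by have := ler_norm Y; have := normr_ge0 Y; rewrite /k; lra.
  have kX : k^+2 * X <= 0 by rewrite mulr_ge0_le0 // sqr_ge0.
  have : Z^+2 * (2 * k - Y) <= 0 by nra.
  rewrite pmulr_lle0 // => Z2; have : Z = 0 by apply/eqP; rewrite -sqrf_eq0 eq_le Z2 sqr_ge0.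
  by move=> ->; rewrite normr0 mulr_ge0.
have Y0 : Y <= 0 by move: Yq; rewrite e0 expr0n.
set k := `|X| + 1.
have h := H (- Z) k.
have hk : 0 < 2 * k - X by have := ler_norm X; have := normr_ge0 X; rewrite /k; lra.
have kY : k^+2 * Y <= 0 by rewrite mulr_ge0_le0 // sqr_ge0.
have : Z^+2 * (2 * k - X) <= 0 by nra.
rewrite pmulr_lle0 // => Z2; have : Z = 0 by apply/eqP; rewrite -sqrf_eq0 eq_le Z2 sqr_ge0.
by move=> ->; rewrite normr0 mulr_ge0.
Qed.
Lemma CS (f g : R -> R) p q : CW f -> CW g -> 0 <= p -> 0 <= q ->
  T f f <= p^+2 -> T g g <= q^+2 -> `|T f g| <= p * q.
Proof.
move=> cf cg p0 q0 hf hg; apply: CS_alg p0 q0 hf hg _ => l m.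
rewrite -Tquad //; apply: T_ge0; apply: cwD; apply: cwM => //; apply: cwc.
Qed.
Definition a : R := (Num.sqrt 3)^-1.
Lemma a_gt0 : 0 < a. Proof. by rewrite invr_gt0 sqrtr_gt0. Qed.
Lemma a3 : 3 * a^+2 = 1.
Proof. by rewrite /a exprVn sqr_sqrtr // mulfV. Qed.
Lemma a_le1 : a <= 1.
Proof.
have := a3; have := a_gt0; nra.
Qed.
Lemma key_t (t : R) : t <= a/4 + 3*a*t^+2.
Proof.
have e : 3*a*(t-a/2)^+2 - (a/4 + 3*a*t^+2 - t) = (1 - 3*a^+2) * (t - a/4) by rewrite /a; field.
rewrite a3 subrr mul0r in e; move/eqP: e; rewrite subr_eq0 => /eqP e.
rewrite -subr_ge0 -e; apply: mulr_ge0; [apply: mulr_ge0 => //; exact: ltW a_gt0|exact: sqr_ge0].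
Qed.
Lemma varbound (f : R -> R) (al be : R) : CW f -> 0 <= al -> 0 <= be ->
  (forall x y, 0 <= x <= 1 -> 0 <= y <= 1 -> `|f x - f y| <= al + be * `|x - y|) ->
  T f f <= ((al + be * a) / 2)^+2.
Proof.
move=> cf al0 be0 Hf.
pose S := [set r | exists x, 0 <= x <= 1 /\ r = f x - al/2 - be * `|x - 2^-1|].
have up (y : R) : 0 <= y <= 1 -> ubound S (f y + al/2 + be * `|y - 2^-1|).
  move=> y01 r [x [x01 ->]].
  have h1 := Hf x y x01 y01.
  have h2 : `|x - y| <= `|x - 2^-1| + `|y - 2^-1|.
    by rewrite (distrC y); apply: ler_distD.
  have h3 := ler_norm (f x - f y).
  have h4 : be * `|x - y| <= be * (`|x - 2^-1| + `|y - 2^-1|) by apply: ler_wpM2l.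
  rewrite mulrDr in h4.
  lra.
have S0 : S (f 0 - al/2 - be * `|0 - 2^-1|) by exists 0; split => //; rewrite lexx ler01.
pose c := sup S.
have hsup : has_ubound S by exists (f 0 + al/2 + be * `|0 - 2^-1|); apply: up; rewrite lexx ler01.
have bnd (y : R) : 0 <= y <= 1 -> `|f y - c| <= al/2 + be * `|y - 2^-1|.
  move=> y01; rewrite ler_norml; apply/andP; split.
    have : c <= f y + al/2 + be * `|y - 2^-1| by apply: ge_sup; [exists (f 0 - al/2 - be * `|0 - 2^-1|)|exact: up].
    move=> ?; lra.
  have : f y - al/2 - be * `|y - 2^-1| <= c.
    by apply: ub_le_sup => //; exists y.
  move=> ?; lra.
set A := al^+2/4 + al*be*a/4.
set B := 3*al*be*a + be^+2.
have pt (y : R) : 0 <= y <= 1 -> (f y - c)^+2 <= A + B * (y - 2^-1)^+2.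
  move=> y01; have hb := bnd y y01.
  set t := `|y - 2^-1|.
  have t0 : 0 <= t by apply: normr_ge0.
  have sqn (z : R) : `|z|^+2 = z^+2 by exact: real_normK (num_real z).
  have -> : (y - 2^-1)^+2 = t^+2 by rewrite /t sqn.
  have h1 : (f y - c)^+2 <= (al/2 + be * t)^+2.
    rewrite -sqn ler_pXn2r // ?nnegrE ?normr_ge0 //.
    by apply: addr_ge0; [apply: divr_ge0|apply: mulr_ge0].
  have h2 := key_t t.
  have h3 : al * be * t <= al * be * (a/4 + 3*a*t^+2) by apply: ler_wpM2l => //; apply: mulr_ge0.
  rewrite /A /B; nra.
have cfc : CW (fun x => (f x - c)^+2) by apply: cwM; apply: cwB.
have csq : CW (fun x : R => (x - 2^-1)^+2) by apply: cwM; apply: cwB; apply: cwid.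
have : I01 (fun x => (f x - c)^+2) <= A + B / 12.
  rewrite (_ : A + B / 12 = I01 (fun x => A + B * (x - 2^-1)^+2)); last first.
    by rewrite I01D ?I01Z ?I01sq ?I01c //; [apply: cwc|apply: cwM => //; apply: cwc].
  apply: I01_le => //; apply: cwD; [apply: cwc|apply: cwM => //; apply: cwc].
rewrite Tcenter // => h.
have e : ((al + be * a) / 2)^+2 - (A + B / 12) = be^+2 * (3 * a^+2 - 1) / 12 by rewrite /A /B; field.
rewrite a3 subrr mulr0 mul0r in e; move/eqP: e; rewrite subr_eq0 => /eqP ->.
have := sqr_ge0 (I01 f - c); lra.
Qed.
Lemma fbnd (f : R -> R) : CW f -> exists M, forall x, 0 <= x <= 1 -> `|f x| <= M.
Proof.
move=> cf; have [c1 c1i h1] := EVT_max ler01 cf; have [c2 c2i h2] := EVT_min ler01 cf.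
exists (`|f c1| + `|f c2|) => x x01.
have xi : x \in `[0, 1] by rewrite in_itv.
have := h1 x xi; have := h2 x xi.
have := ler_norm (f c1); have := ler_normr (f c2) ; have := normr_ge0 (f c1).
have := normr_ge0 (f c2); have := ler_norm (- f c2); rewrite normrN.
rewrite ler_norml => *; apply/andP; split; lra.
Qed.
Section Om.
Variable f : R -> R.
Hypothesis cf : CW f.
Let M := xget 0 [set M | forall x, 0 <= x <= 1 -> `|f x| <= M].
Lemma hM x : 0 <= x <= 1 -> `|f x| <= M.
Proof. rewrite /M; case: xgetP => [M' _ H|H]; first exact: H.
by have [M' HM] := fbnd f cf; have := H M'; move=> /(_ HM). Qed.
Lemma dif_bnd x y : 0 <= x <= 1 -> 0 <= y <= 1 -> `|f x - f y| <= 2 * M.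
Proof. move=> hx hy; have := ler_normB (f x) (f y); have := hM _ hx; have := hM _ hy; lra. Qed.
Lemma om_has (t : R) : has_ubound [set r | exists x y : R, [/\ 0 <= x <= 1, 0 <= y <= 1, `|x - y| <= t
                                   & r = `|f x - f y| ] ].
Proof. by exists (2 * M) => r [x [y [hx hy _ ->]]]; apply: dif_bnd. Qed.
Lemma om_ub t x y : 0 <= x <= 1 -> 0 <= y <= 1 -> `|x - y| <= t -> `|f x - f y| <= omega f t.
Proof. move=> hx hy hxy; apply: ub_le_sup; first exact: om_has. by exists x, y. Qed.
Lemma om_ge0 t : 0 <= t -> 0 <= omega f t.
Proof. move=> t0; have h := @om_ub t 0 0; rewrite !subrr !normr0 in h; apply: h; rewrite ?lexx ?ler01 //. Qed.
Lemma om_le t : 0 <= t -> omega f t <= 2 * M.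
Proof.
move=> t0; apply: ge_sup; first by exists 0, 0, 0; split; rewrite ?subrr ?normr0 ?lexx ?ler01.
by move=> r [x [y [hx hy _ ->]]]; apply: dif_bnd.
Qed.
Lemma om_mono s t : 0 <= s -> s <= t -> omega f s <= omega f t.
Proof.
move=> s0 st; apply: ge_sup; first by exists 0, 0, 0; split; rewrite ?subrr ?normr0 ?lexx ?ler01.
move=> r [x [y [hx hy h ->]]]; apply: om_ub => //; exact: le_trans st.
Qed.
Lemma a_lt1 : a < 1.
Proof. have := a3; have := a_gt0; nra. Qed.
Lemma decomp : exists al be, [/\ 0 <= al, 0 <= be, al + be * a <= omega_tilde f a &
  forall x y, 0 <= x <= 1 -> 0 <= y <= 1 -> `|f x - f y| <= al + be * `|x - y| ].
Proof.
have a0 := a_gt0; have a1 := a_lt1.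
set K := omega_tilde f a.
pose Sa := [set r | exists x y : R, [/\ 0 <= x <= a, a <= y <= 1, x != y
             & r = ((a - x) * omega f y + (y - a) * omega f x) / (y - x)] ].
have Ke : K = sup Sa by rewrite /K /omega_tilde ifT // ltW.
have hK x y : 0 <= x <= a -> a <= y <= 1 -> x != y ->
    ((a - x) * omega f y + (y - a) * omega f x) / (y - x) <= K.
  move=> hx hy xy; rewrite Ke; apply: ub_le_sup; last by exists x, y.
  exists (2 * M) => r [x' [y' [hx' hy' xy' ->]]].
  have yx : 0 < y' - x'.
    rewrite subr_gt0 lt_neqAle; apply/andP; split; first by [].
    move: hx' hy' => /andP[_ ?] /andP[? _]; lra.
  rewrite ler_pdivrMr //.
  move: hx' hy' => /andP[? ?] /andP[? ?].
  have hy0 : 0 <= y' by lra.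
  have hx0 : 0 <= x' by lra.
  have h1 := om_le y' hy0; have h2 := om_le x' hx0.
  have h3 : (a - x') * omega f y' <= (a - x') * (2 * M) by apply: ler_wpM2l => //; lra.
  have h4 : (y' - a) * omega f x' <= (y' - a) * (2 * M) by apply: ler_wpM2l => //; lra.
  nra.
have aK : omega f a <= K.
  have := hK a 1; rewrite subrr mul0r add0r mulrAC divff ?mul1r; last by rewrite subr_eq0 eq_sym lt_eqF.
  apply; rewrite ?lexx ?(ltW a0) ?(ltW a1) ?lt_eqF //.
have chord x y : 0 <= x < a -> a < y <= 1 ->
    (omega f y - K) / (y - a) <= (K - omega f x) / (a - x).
  move=> /andP[x0 xa] /andP[ay y1].
  have := hK x y; rewrite x0 (ltW xa) (ltW ay) y1 /= => /(_ isT isT).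
  have xy : x != y by rewrite lt_eqF // (lt_trans xa ay).
  move=> /(_ xy); rewrite ler_pdivrMr; last by rewrite subr_gt0 (lt_trans xa ay).
  move=> h.
  rewrite ler_pdivrMr ?subr_gt0 // mulrAC ler_pdivlMr ?subr_gt0 //.
  nra.
pose A := [set s | exists y, a < y <= 1 /\ s = (omega f y - K) / (y - a)].
have A0 : A ((omega f 1 - K) / (1 - a)) by exists 1; rewrite a1 lexx.
have Aub : ubound A ((K - omega f 0) / (a - 0)).
  by move=> s [y [hy ->]]; apply: chord; rewrite // lexx a0.
pose be := Num.max 0 (sup A).
have be0 : 0 <= be by rewrite /be le_max lexx.
have sAle x : 0 <= x < a -> sup A <= (K - omega f x) / (a - x).
  move=> hx; apply: ge_sup; first by exists ((omega f 1 - K) / (1 - a)).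
  by move=> s [y [hy ->]]; apply: chord.
have omb t : 0 <= t <= 1 -> omega f t <= K + be * (t - a).
  move=> /andP[t0 t1]; have [ta|nta] := ltP t a.
    have hx : 0 <= t < a by rewrite t0 ta.
    have wt : omega f t <= K := le_trans (om_mono t a t0 (ltW ta)) aK.
    have : be <= (K - omega f t) / (a - t).
      rewrite /be ge_max sAle // andbT; apply: divr_ge0; rewrite subr_ge0 // ltW //.
    rewrite ler_pdivlMr ?subr_gt0 // => h; nra.
  move: nta; rewrite le_eqVlt => /orP[/eqP <-|ta]; first by rewrite subrr mulr0 addr0.
  have : sup A <= be by rewrite /be le_max lexx orbT.
  have : (omega f t - K) / (t - a) <= sup A.
    apply: ub_le_sup; first by exists ((K - omega f 0) / (a - 0)).
    by exists t; rewrite ta t1.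
  move=> h1 h2; have := le_trans h1 h2; rewrite ler_pdivrMr ?subr_gt0 // => h; nra.
exists (K - be * a), be; split => //.
- have := omb 0; rewrite lexx ler01 => /(_ isT); have := om_ge0 0 (lexx 0); lra.
- by rewrite subrK.
move=> x y hx hy.
have d01 : 0 <= `|x - y| <= 1.
  rewrite normr_ge0 /=; move: hx hy => /andP[? ?] /andP[? ?].
  rewrite ler_norml; apply/andP; split; lra.
have := om_ub `|x - y| x y hx hy (lexx _); have := omb _ d01; lra.
Qed.
End Om.
End S.
Section S2.
Variable R : realType.
Notation mu := (@lebesgue_measure R).
Lemma ae_bound (df : R -> R) (Mf : R) (D : set R) : measurable D -> D `<=` `[0, 1] ->
  measurable_fun D df ->
  {ae mu, forall x, x \in `[0, 1] -> `|df x| <= Mf} -> 0 <= Mf ->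
  (\int[mu]_(x in D) (`|df x|)%:E <= (Mf%:E * mu D))%E.
Proof.
move=> mD D01 mdf hae M0.
rewrite -integral_cst //. apply: ae_ge0_le_integral => //.
  by apply/measurable_realfun.measurable_EFinP; apply: measurableT_comp.
apply: (@filterS _ _ (ae_filter_ringOfSetsType mu) _ _ _ hae) => x h Dx; rewrite /= lee_fin; apply: h.
by rewrite inE; apply: D01.
Qed.
Lemma Mge0 (df : R -> R) Mf :
  {ae mu, forall x, x \in `[0, 1] -> `|df x| <= Mf} -> 0 <= Mf.
Proof.
move=> hae; rewrite leNgt; apply/negP => M0.
have : (\int[mu]_(x in `[0%R, 1%R]) (cst 1%:E) x <= \int[mu]_(x in `[0%R, 1%R]) (cst 0%:E) x)%E.
  apply: ae_ge0_le_integral => //.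
  apply: (@filterS _ _ (ae_filter_ringOfSetsType mu) _ _ _ hae) => x h Dx.
  exfalso; have := h Dx; have := normr_ge0 (df x); lra.
by rewrite !integral_cst // mul1e mul0e /= lebesgue_measure_itv /= ifT ?ltr01 // oppr0 adde0 lee_fin ler10.
Qed.
Lemma lipL (f df : R -> R) Mf : Linf_deriv_bound f df Mf ->
  forall x y, 0 <= x <= 1 -> 0 <= y <= 1 -> `|f x - f y| <= Mf * `|x - y|.
Proof.
case=> mdf hae hf; have M0 := Mge0 df Mf hae.
have int01 : mu.-integrable `[0%R, 1%R] (EFin \o df).
  apply/integrableP; split; first exact/measurable_realfun.measurable_EFinP.
  have hb := ae_bound df Mf _ (measurable_itv _) (@subset_refl _ `[0%R, 1%R]) mdf hae M0.
  refine (le_lt_trans hb _).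
  by rewrite /= lebesgue_measure_itv /= ifT ?ltr01 // oppr0 adde0 mule1 ltey.
have key x y : 0 <= y -> y <= x -> x <= 1 -> `|f x - f y| <= Mf * (x - y).
  move=> y0 yx x1.
  have x0 : 0 <= x by apply: le_trans yx.
  have ix : mu.-integrable `[0%R, x] (EFin \o df).
    apply: integrableS int01 => //; apply: subset_itvl; rewrite bnd_simp //.
  have := @Rintegral_itvB R df (BLeft 0) (BRight x) y ix.
  rewrite !bnd_simp y0 yx => /(_ isT isT) e.
  rewrite (hf x); last by rewrite x0.
  rewrite (hf y); last by rewrite y0 (le_trans yx x1).
  have -> : f 0 + \int[mu]_(x0 in `[0, x]) df x0 - (f 0 + \int[mu]_(x0 in `[0, y]) df x0)
     = \int[mu]_(x0 in `]y, x]) df x0 by rewrite -e; ring.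
  have iyx : mu.-integrable `]y, x] (EFin \o df).
    apply: integrableS ix => //; apply: subset_itvr; rewrite bnd_simp //.
  apply: le_trans; first exact: le_normr_Rintegral.
  have yxs : `]y, x] `<=` `[0%R, 1%R].
    by apply: subset_itv; rewrite bnd_simp //.
  have hb := ae_bound df Mf _ (measurable_itv _) yxs (measurable_funS _ yxs mdf) hae M0.
  rewrite lebesgue_measure_itv /= in hb.
  have hb' : (\int[mu]_(x in `]y, x]) (`|df x|)%:E <= (Mf * (x - y))%:E)%E.
    move: hb => /(_ (measurable_itv _)); case: ifP => _ h.
      by apply: (le_trans h); rewrite -EFinD -EFinM.
    by apply: (le_trans h); rewrite mule0 lee_fin mulr_ge0 // subr_ge0.
  have i0 : (0 <= \int[mu]_(x in `]y, x]) (`|df x|)%:E)%E.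
    by apply: integral_ge0 => t _; rewrite lee_fin.
  rewrite /Rintegral -[X in _ <= X]/(fine (Mf * (x - y))%:E).
  apply: fine_le => //; rewrite ge0_fin_numE //; apply: le_lt_trans hb' _; exact: ltey.
move=> x y hx hy; have [yx|xy] := leP y x.
  rewrite (ger0_norm (_ : 0 <= x - y)) ?subr_ge0 //; apply: key => //.
    by case/andP: hy.
  by case/andP: hx.
rewrite distrC (distrC x) (gtr0_norm (_ : 0 < y - x)) ?subr_gt0 //; apply: key => //.
  by case/andP: hx.
  by apply: ltW.
by case/andP: hy.
Qed.
End S2.
Theorem mainTheorem8 (R : realType) (f g : R -> R) :
  {within `[0, 1], continuous f} -> {within `[0, 1], continuous g} ->
  `|I01 (fun x => f x * g x) - I01 f * I01 g|
     <= 4^-1 * omega_tilde f (Num.sqrt 3)^-1 * omega_tilde g (Num.sqrt 3)^-1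
  /\
  (forall (df dg : R -> R) (Mf Mg : R),
     Linf_deriv_bound f df Mf -> Linf_deriv_bound g dg Mg ->
     `|I01 (fun x => f x * g x) - I01 f * I01 g| <= 12^-1 * Mf * Mg).
Proof.
move=> cf cg; split.
  have [al [be [al0 be0 hK hl]]] := decomp _ _ cf.
  have [al' [be' [al0' be0' hK' hl']]] := decomp _ _ cg.
  have va := varbound _ _ _ _ cf al0 be0 hl.
  have vb := varbound _ _ _ _ cg al0' be0' hl'.
  have a0 := @a_gt0 R.
  rewrite /a in hK hK' va vb a0.
  set K1 := omega_tilde f _ in hK *; set K2 := omega_tilde g _ in hK' *.
  set s := (Num.sqrt 3)^-1 in hK hK' va vb a0 *.
  have u0 : 0 <= (al + be * s) / 2 by apply: divr_ge0 => //; apply: addr_ge0 => //; apply: mulr_ge0 => //; apply: ltW.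
  have u0' : 0 <= (al' + be' * s) / 2 by apply: divr_ge0 => //; apply: addr_ge0 => //; apply: mulr_ge0 => //; apply: ltW.
  have w1 : T R f f <= (K1 / 2)^+2.
    apply: le_trans va _; rewrite ler_pXn2r // ?nnegrE //; first by lra.
    lra.
  have w2 : T R g g <= (K2 / 2)^+2.
    apply: le_trans vb _; rewrite ler_pXn2r // ?nnegrE //; first by lra.
    lra.
  have := CS _ _ _ _ _ cf cg (_ : 0 <= K1 / 2) (_ : 0 <= K2 / 2) w1 w2.
  rewrite /T => h; apply: le_trans (h _ _) _; try lra.
move=> df dg Mf Mg hf hg.
have lf := lipL _ _ _ _ hf; have lg := lipL _ _ _ _ hg.
have [_ haef _] := hf; have [_ haeg _] := hg.
have M1 := Mge0 _ df Mf haef; have M2 := Mge0 _ dg Mg haeg.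
have hl1 : forall x y, 0 <= x <= 1 -> 0 <= y <= 1 -> `|f x - f y| <= 0 + Mf * `|x - y|.
  by move=> x y hx hy; rewrite add0r; apply: lf.
have hl2 : forall x y, 0 <= x <= 1 -> 0 <= y <= 1 -> `|g x - g y| <= 0 + Mg * `|x - y|.
  by move=> x y hx hy; rewrite add0r; apply: lg.
have va := varbound _ _ _ _ cf (lexx 0) M1 hl1.
have vb := varbound _ _ _ _ cg (lexx 0) M2 hl2.
have a0 := ltW (@a_gt0 R).
have := CS _ _ _ _ _ cf cg (_ : 0 <= (0 + Mf * a R) / 2) (_ : 0 <= (0 + Mg * a R) / 2) va vb.
rewrite /T => h; apply: le_trans (h _ _) _.
- by rewrite add0r; apply: divr_ge0 => //; apply: mulr_ge0.
- by rewrite add0r; apply: divr_ge0 => //; apply: mulr_ge0.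
have e := @a3 R.
rewrite !add0r (_ : Mf * a R / 2 * (Mg * a R / 2) = Mf * Mg * (3 * a R ^+ 2) / 12); last by field.
by rewrite e mulr1 mulrC mulrA.
Qed.
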